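(* Let $b>0$ and define, for $r>0$, \[ \begin{aligned} \underline u_{\rm out}(r)&= Lr^{-m}-br^{-l},\\ \underline v_{\rm out}(r)&= m(n-2-m)Lr^{-m-2}- l(n-2-l)br^{-l-2},\\ \underline w_{\rm out}(r)&= m(m+2)(n-2-m)(n-4-m)Lr^{-m-4}- l(l+2)(n-2-l)(n-4-l)br^{-l-4}, \end{aligned} \] and $\underline r_1=(b/L)^{1/(l-m)}$. Then \[ -\Delta \underline u_{\rm out} =\underline v_{\rm out} \ \text{ for all } r>0,\qquad -\Delta \underline v_{\rm out} =\underline w_{\rm out} \ \text{ for all } r>0,\qquad -\Delta \underline w_{\rm out} \leqslant \underline u_{\rm out}^p \ \text{ for all } r>\underline r_1 . \]
   Context: Let $n\geqslant 15$ and $p>p_{\mathsf{JL}}(6,n)$, where $p_{\mathsf{JL}}(6,n)=\frac{(n+4)\sqrt{3} - \sqrt{\sqrt[3]{K_0+K_1}+ \sqrt[3]{K_0-K_1} + 3n^2+32 }}{(n-8)\sqrt{3} - \sqrt{\sqrt[3]{K_0+K_1} + \sqrt[3]{K_0-K_1} + 3n^2+32 }}$ with $2K_0 =-27n^6+324 n^5-756n^4-2592 n^3 + 25776 n^2 +5184 n -23744$, $2K_1 = \sqrt{(2K_0)^2 - 4(192n^2+256)^3}$. Let $m=6/(p-1)$, $L=\big(m(m+2)(m+4)(n-2-m)(n-4-m)(n-6-m)\big)^{1/(p-1)}$, and let $\lambda_3$ be the smallest positive root of $P(\lambda)=(m+\lambda)(m+\lambda+2)(m+\lambda+4)(n-2-m-\lambda)(n-4-m-\lambda)(n-6-m-\lambda)-pL^{p-1}$;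 set $l=m+\lambda_3$. For a function $f$ of $r>0$, $\Delta f$ denotes the Laplacian in $\mathbf R^n$ of $x\mapsto f(|x|)$, i.e. $f''+\frac{n-1}{r}f'$. *)

(* Defs.v *)
From Stdlib Require Import Reals Lra.
From Coquelicot Require Import Coquelicot.
Open Scope R_scope.

Definition cbrt (x : R) : R :=
  if Rlt_dec 0 x then Rpower x (1/3)
  else if Rlt_dec x 0 then - Rpower (- x) (1/3) else 0.

Definition K0 (n : nat) : R :=
  let N := INR n in
  (-27 * N^6 + 324 * N^5 - 756 * N^4 - 2592 * N^3 + 25776 * N^2
   + 5184 * N - 23744) / 2.

Definition K1 (n : nat) : R :=
  let N := INR n in
  sqrt ((2 * K0 n)^2 - 4 * (192 * N^2 + 256)^3) / 2.

Definition pJL6 (n : nat) : R :=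
  let N := INR n in
  let S := cbrt (K0 n + K1 n) + cbrt (K0 n - K1 n) + 3 * N^2 + 32 in
  ((N + 4) * sqrt 3 - sqrt S) / ((N - 8) * sqrt 3 - sqrt S).

Definition mexp (p : R) : R := 6 / (p - 1).

Definition Lconst (n : nat) (p : R) : R :=
  let N := INR n in let m := mexp p in
  Rpower (m * (m + 2) * (m + 4) * (N - 2 - m) * (N - 4 - m) * (N - 6 - m))
         (1 / (p - 1)).

Definition Ppoly (n : nat) (p lam : R) : R :=
  let N := INR n in let m := mexp p in
  (m + lam) * (m + lam + 2) * (m + lam + 4) * (N - 2 - m - lam)
  * (N - 4 - m - lam) * (N - 6 - m - lam) - p * Rpower (Lconst n p) (p - 1).

Definition radLap (n : nat) (f : R -> R) (r : R) : R :=
  Derive (Derive f) r + (INR n - 1) / r * Derive f r.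

Definition u_out (n : nat) (p b l : R) (r : R) : R :=
  let m := mexp p in let L := Lconst n p in
  L * Rpower r (- m) - b * Rpower r (- l).

Definition v_out (n : nat) (p b l : R) (r : R) : R :=
  let N := INR n in let m := mexp p in let L := Lconst n p in
  m * (N - 2 - m) * L * Rpower r (- m - 2)
  - l * (N - 2 - l) * b * Rpower r (- l - 2).

Definition w_out (n : nat) (p b l : R) (r : R) : R :=
  let N := INR n in let m := mexp p in let L := Lconst n p in
  m * (m + 2) * (N - 2 - m) * (N - 4 - m) * L * Rpower r (- m - 4)
  - l * (l + 2) * (N - 2 - l) * (N - 4 - l) * b * Rpower r (- l - 4).

Definition r1_out (n : nat) (p b l : R) : R :=
  Rpower (b / Lconst n p) (1 / (l - mexp p)).

(* Main.v *)
Require Import Defs.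
From Stdlib Require Import Reals Lra Lia Psatz List.
Import ListNotations.
From Coquelicot Require Import Coquelicot.
Open Scope R_scope.

Lemma Rpower_gt0 x y : 0 < Rpower x y.
Proof. unfold Rpower; apply exp_pos. Qed.

Lemma Rpower_base1 y : Rpower 1 y = 1.
Proof. unfold Rpower; rewrite ln_1, Rmult_0_r, exp_0; reflexivity. Qed.

Lemma Rpower_cube A : 0 < A -> (Rpower A (1/3))^3 = A.
Proof.
  intro HA. rewrite <- Rpower_pow by apply Rpower_gt0.
  rewrite Rpower_mult. replace (1/3 * INR 3) with 1 by (simpl; field).
  apply Rpower_1; auto.
Qed.

Fixpoint evalp (k : R) (l : list R) : R :=
  match l with nil => 0 | cons c t => c + k * evalp k t end.

Lemma pos_poly (k : R) (l : list R) : 0 <= k -> List.Forall (fun c => 0 <= c) l ->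
  0 <= evalp k l.
Proof.
  intros Hk H; induction H; simpl. lra.
  apply Rplus_le_le_0_compat; auto. apply Rmult_le_pos; auto.
Qed.

Lemma pJL_bound n : (15 <= n)%nat -> pJL6 n > INR n / (INR n - 6).
Proof.
  intro Hn.
  assert (HN : 15 <= INR n) by (replace 15 with (INR 15) by (simpl; lra); apply le_INR; auto).
  set (N := INR n) in *.
  set (k := N - 15).
  assert (Hk : 0 <= k) by (unfold k; lra).
  assert (HN' : N = k + 15) by (unfold k; lra).
  set (T := - 2 * K0 n).
  set (P := 192 * N^2 + 256).
  set (c := 48 * N - 160).
  assert (HT : T - 5 * N^6 >= 0).
  { unfold T, K0. fold N. rewrite HN'.
    match goal with |- ?e >= 0 => replace e with
      (evalp k
        [45723134; 29402136; 6882714; 803952; 50706; 1656; 22]) by (simpl; field) end.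
    apply Rle_ge, pos_poly; auto. repeat constructor; lra. }
  assert (He : T + 3 * P * c - c^3 > 0).
  { unfold T, K0, P, c. fold N. rewrite HN'.
    match goal with |- ?e > 0 => replace e with
      (66339 + k * evalp k
        [22959450; 7960869; 1058508; 67581; 2106; 27]) by (simpl; field) end.
    assert (0 <= evalp k
        [22959450; 7960869; 1058508; 67581; 2106; 27]).
    { apply pos_poly; auto. repeat constructor; lra. }
    nra. }
  assert (HD : 0 <= (2 * K0 n)^2 - 4 * (192 * N^2 + 256)^3).
  { unfold K0. fold N. rewrite HN'.
    match goal with |- 0 <= ?e => replace e with
      (evalp k
        [10214160759983817; 10585461850409628; 4894534148604354; 1347076448060364; 246965545626615; 31863611628216; 2971699904988; 202081266936; 9951685191; 346289580; 8084610; 113724; 729]) by (simpl; field) end.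
    apply pos_poly; auto. repeat constructor; lra. }

  assert (HT0 : T > 0) by (assert (0 < N^6) by (apply pow_lt; lra); lra).
  assert (HP : P > 0) by (unfold P; nra).
  assert (Hc : c > 0) by (unfold c; lra).
  set (D := (2 * K0 n)^2 - 4 * (192 * N^2 + 256)^3) in HD.
  assert (HK1 : K1 n = sqrt D / 2) by reflexivity.
  assert (HsD : sqrt D < T).
  { rewrite <- (sqrt_pow2 T) by lra. apply sqrt_lt_1_alt. split; auto.
    unfold D. fold P. replace (2 * K0 n) with (- T) by (unfold T; ring).
    assert (0 < P^3) by (apply pow_lt; lra). nra. }
  assert (HsD0 : 0 <= sqrt D) by apply sqrt_pos.
  set (A := - (K0 n + K1 n)). set (B := - (K0 n - K1 n)).
  assert (HA : 0 < A) by (unfold A, T in *; lra).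
  assert (HB : 0 < B) by (unfold B, T in *; lra).
  assert (HcA : cbrt (K0 n + K1 n) = - Rpower A (1/3)).
  { unfold cbrt. destruct (Rlt_dec 0 (K0 n + K1 n)). unfold A in HA; lra.
    destruct (Rlt_dec (K0 n + K1 n) 0). reflexivity. unfold A in HA; lra. }
  assert (HcB : cbrt (K0 n - K1 n) = - Rpower B (1/3)).
  { unfold cbrt. destruct (Rlt_dec 0 (K0 n - K1 n)). unfold B in HB; lra.
    destruct (Rlt_dec (K0 n - K1 n) 0). reflexivity. unfold B in HB; lra. }
  set (x := Rpower A (1/3)). set (y := Rpower B (1/3)).
  assert (Hx3 : x^3 = A) by (apply Rpower_cube; auto).
  assert (Hy3 : y^3 = B) by (apply Rpower_cube; auto).
  assert (Hx : 0 < x) by apply Rpower_gt0.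
  assert (Hy : 0 < y) by apply Rpower_gt0.
  assert (HAB : A * B = P^3).
  { unfold A, B. rewrite HK1.
    replace (- (K0 n + sqrt D / 2) * - (K0 n - sqrt D / 2)) with (K0 n ^2 - (sqrt D)^2/4) by field.
    rewrite pow2_sqrt by auto. unfold D, P. field. }
  assert (Hxy : x * y = P).
  { unfold x, y. rewrite Rpower_mult_distr by auto. rewrite HAB.
    rewrite <- Rpower_pow by auto. rewrite Rpower_mult.
    replace (INR 3 * (1/3)) with 1 by (simpl; field). apply Rpower_1; auto. }
  set (s := x + y).
  assert (Hs3 : s^3 = T + 3 * P * s).
  { unfold s. replace ((x+y)^3) with (x^3 + y^3 + 3 * (x*y) * (x+y)) by ring.
    rewrite Hx3, Hy3, Hxy. unfold A, B, T. ring. }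
  assert (Hs0 : 0 < s) by (unfold s; lra).
  assert (Hsc : s > c).
  { destruct (Rle_or_lt s c) as [Hle|]; auto. exfalso.
    assert (H1 : s * ((s - c) * (s + c)) <= 0).
    { assert ((s - c) * (s + c) <= 0) by nra. nra. }
    assert (H2 : T <= s * (c^2 - 3 * P)).
    { replace (s * ((s - c) * (s + c))) with (s^3 - s * c^2) in H1 by ring. nra. }
    destruct (Rle_or_lt (c^2 - 3*P) 0) as [H3|H3].
    - assert (s * (c^2 - 3*P) <= 0) by nra. lra.
    - assert (s * (c^2 - 3*P) <= c * (c^2 - 3*P)) by nra. nra. }
  unfold pJL6. cbv zeta. rewrite HcA, HcB. fold N x y.
  set (S := - x + - y + 3 * N^2 + 32).
  assert (HS : S < 3 * (N - 8)^2) by (unfold S, c, s in *; nra).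
  assert (H3 : 0 < sqrt 3) by (apply sqrt_lt_R0; lra).
  assert (HsS : sqrt S < (N - 8) * sqrt 3).
  { destruct (Rle_or_lt S 0).
    - rewrite sqrt_neg_0 by auto. nra.
    - replace ((N - 8) * sqrt 3) with (sqrt (3 * (N-8)^2)).
      + apply sqrt_lt_1_alt; lra.
      + rewrite sqrt_mult by nra. rewrite sqrt_pow2 by lra. ring. }
  assert (HsS0 : 0 <= sqrt S) by apply sqrt_pos.
  set (q := sqrt S) in *. set (a := sqrt 3) in *.
  set (Dn := (N - 8) * a - q).
  assert (HDn : 0 < Dn) by (unfold Dn; lra).
  replace ((N + 4) * a - q) with (Dn + 12 * a) by (unfold Dn; ring).
  apply Rlt_gt. apply (Rmult_lt_reg_r (Dn * (N - 6))). nra.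
  replace (N / (N - 6) * (Dn * (N - 6))) with (N * Dn) by (field; lra).
  replace ((Dn + 12 * a) / Dn * (Dn * (N - 6))) with ((Dn + 12 * a) * (N - 6)) by (field; lra).
  assert (Dn <= (N - 8) * a) by (unfold Dn; lra).
  nra.
Qed.

Lemma isD_pow a x : 0 < x -> is_derive (fun y => Rpower y a) x (a * Rpower x (a - 1)).
Proof. intro; apply is_derive_Reals, derivable_pt_lim_power; auto. Qed.

Lemma isD_comb A B a c x : 0 < x ->
  is_derive (fun y => A * Rpower y a - B * Rpower y c) x
    (A * (a * Rpower x (a - 1)) - B * (c * Rpower x (c - 1))).
Proof.
  intro Hx.
  apply (is_derive_minus (fun y => A * Rpower y a) (fun y => B * Rpower y c));
    apply is_derive_scal; apply isD_pow; auto.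
Qed.

Lemma radLap_gen n A B a c f r : 0 < r ->
  (forall x, f x = A * Rpower x a - B * Rpower x c) ->
  radLap n f r = A * a * (a + INR n - 2) * Rpower r (a - 2)
               - B * c * (c + INR n - 2) * Rpower r (c - 2).
Proof.
  intros Hr Hf.
  assert (HD : forall x, 0 < x -> Derive f x =
     (A * a) * Rpower x (a - 1) - (B * c) * Rpower x (c - 1)).
  { intros x Hx. rewrite (Derive_ext f (fun y => A * Rpower y a - B * Rpower y c)) by auto.
    replace ((A * a) * Rpower x (a - 1) - (B * c) * Rpower x (c - 1)) with
      (A * (a * Rpower x (a - 1)) - B * (c * Rpower x (c - 1))) by ring.
    apply is_derive_unique, isD_comb; auto. }
  unfold radLap.
  rewrite (Derive_ext_loc (Derive f) (fun y => (A * a) * Rpower y (a - 1) - (B * c) * Rpower y (c - 1))).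
  2:{ exists (mkposreal r Hr). intros t Ht. apply HD.
      unfold ball in Ht; simpl in Ht; unfold AbsRing_ball, abs, minus, plus, opp in Ht; simpl in Ht.
      apply Rabs_lt_between' in Ht. lra. }
  erewrite is_derive_unique; [| apply (isD_comb (A*a) (B*c) (a-1) (c-1) r Hr)].
  rewrite HD by auto.
  replace (a - 1 - 1) with (a - 2) by ring. replace (c - 1 - 1) with (c - 2) by ring.
  replace (a - 1) with ((a - 2) + 1) by ring. replace (c - 1) with ((c - 2) + 1) by ring.
  rewrite !Rpower_plus, !Rpower_1 by auto.
  field. lra.
Qed.

Lemma bernoulli p t : 1 <= p -> 0 < t < 1 -> 1 - p * t <= Rpower (1 - t) p.
Proof.
  intros Hp Ht.
  destruct (MVT_cor2 (fun y => Rpower y p) (fun y => p * Rpower y (p - 1)) (1 - t) 1)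
    as [z [Hz1 Hz2]]; [lra| |].
  { intros z Hz. apply derivable_pt_lim_power. lra. }
  rewrite Rpower_base1 in Hz1.
  assert (Rpower z (p - 1) <= 1).
  { pose proof (Rpower_base1 (p - 1)) as E.
    pose proof (Rle_Rpower_l z 1 (p - 1) ltac:(lra) ltac:(lra)). lra. }
  assert (0 <= p * t) by nra.
  assert (p * t * Rpower z (p - 1) <= p * t * 1) by (apply Rmult_le_compat_l; lra).
  replace (1 - (1 - t)) with t in Hz1 by ring. nra.
Qed.

Theorem lemma3p1 (n : nat) (p b lam3 : R)
  (Hn : (15 <= n)%nat) (Hp : p > pJL6 n) (Hb : b > 0)
  (Hlam_pos : 0 < lam3) (Hlam_root : Ppoly n p lam3 = 0)
  (Hlam_min : forall lam, 0 < lam < lam3 -> Ppoly n p lam <> 0) :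
  let l := mexp p + lam3 in
  (forall r, r > 0 -> - radLap n (u_out n p b l) r = v_out n p b l r) /\
  (forall r, r > 0 -> - radLap n (v_out n p b l) r = w_out n p b l r) /\
  (forall r, r > r1_out n p b l ->
     - radLap n (w_out n p b l) r <= Rpower (u_out n p b l r) p).
Proof.
  intro l.
  split; [|split].
  - intros r Hr. rewrite (radLap_gen n (Lconst n p) b (- mexp p) (- l) _ r Hr)
      by (intro; reflexivity).
    unfold v_out. cbv zeta. ring.
  - intros r Hr. rewrite (radLap_gen n (mexp p * (INR n - 2 - mexp p) * Lconst n p)
      (l * (INR n - 2 - l) * b) (- mexp p - 2) (- l - 2) _ r Hr)
      by (intro; reflexivity).
    unfold w_out. cbv zeta.
    replace (- mexp p - 2 - 2) with (- mexp p - 4) by ring.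
    replace (- l - 2 - 2) with (- l - 4) by ring. ring.
  - intros r Hr.
    pose proof (pJL_bound n Hn) as HJ.
    assert (HN : 15 <= INR n) by (replace 15 with (INR 15) by (simpl; lra); apply le_INR; auto).
    set (N := INR n) in *.
    assert (HN6 : 0 < N - 6) by lra.
    assert (Hp1 : 6 / (N - 6) < p - 1).
    { assert (N / (N - 6) = 1 + 6 / (N - 6)) by (field; lra). lra. }
    assert (Hp0 : 0 < p - 1).
    { assert (0 < 6 / (N - 6)) by (apply Rdiv_lt_0_compat; lra). lra. }
    set (m := mexp p).
    assert (Hm0 : 0 < m) by (unfold m, mexp; apply Rdiv_lt_0_compat; lra).
    assert (Hm6 : m < N - 6).
    { unfold m, mexp. apply (Rmult_lt_reg_r (p - 1)); auto.
      replace (6 / (p - 1) * (p - 1)) with 6 by (field; lra).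
      apply (Rmult_lt_reg_r (/ (N - 6))). apply Rinv_0_lt_compat; lra.
      replace ((N - 6) * (p - 1) * / (N - 6)) with (p - 1) by (field; lra).
      unfold Rdiv in Hp1. lra. }
    assert (Hmp : m * (p - 1) = 6) by (unfold m, mexp; field; lra).
    set (QM := m * (m + 2) * (m + 4) * (N - 2 - m) * (N - 4 - m) * (N - 6 - m)).
    assert (HQM : 0 < QM).
    { unfold QM. do 5 (apply Rmult_lt_0_compat; [|lra]). exact Hm0. }
    set (L := Lconst n p).
    assert (HLdef : L = Rpower QM (1 / (p - 1))) by reflexivity.
    assert (HL : 0 < L) by (rewrite HLdef; apply Rpower_gt0).
    assert (HLK : Rpower L (p - 1) = QM).
    { rewrite HLdef, Rpower_mult. replace (1 / (p - 1) * (p - 1)) with 1 by (field; lra).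
      apply Rpower_1; auto. }
    assert (HQl : l * (l + 2) * (l + 4) * (N - 2 - l) * (N - 4 - l) * (N - 6 - l) = p * QM).
    { unfold Ppoly in Hlam_root. cbv zeta in Hlam_root. fold N m L in Hlam_root.
      rewrite HLK in Hlam_root. apply Rminus_diag_uniq. rewrite <- Hlam_root.
      unfold l. fold m. ring. }
    assert (Hr1 : 0 < r1_out n p b l) by apply Rpower_gt0.
    assert (Hr0 : 0 < r) by lra.
    rewrite (radLap_gen n (m * (m + 2) * (N - 2 - m) * (N - 4 - m) * L)
      (l * (l + 2) * (N - 2 - l) * (N - 4 - l) * b) (- m - 4) (- l - 4) _ r Hr0)
      by (intro; reflexivity).
    replace (- m - 4 - 2) with (- m - 6) by ring.
    replace (- l - 4 - 2) with (- l - 6) by ring.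
    set (R6 := Rpower r (- m - 6)). set (R6l := Rpower r (- l - 6)).
    set (X := Rpower r (- m)). set (Y := Rpower r (- l)).
    assert (HX : 0 < X) by apply Rpower_gt0.
    assert (HY : 0 < Y) by apply Rpower_gt0.
    assert (HR6 : 0 < R6) by apply Rpower_gt0.
    assert (HLHS : - (m * (m + 2) * (N - 2 - m) * (N - 4 - m) * L * (- m - 4) *
        (- m - 4 + N - 2) * R6 - l * (l + 2) * (N - 2 - l) * (N - 4 - l) * b * (- l - 4) *
        (- l - 4 + N - 2) * R6l) = QM * L * R6 - p * QM * b * R6l).
    { rewrite <- HQl. unfold QM. ring. }
    fold N. rewrite HLHS.
    assert (Hu : u_out n p b l r = L * X - b * Y) by reflexivity.
    rewrite Hu.
    assert (Hlm : 0 < l - m) by (unfold l; fold m; lra).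
    assert (HbL : 0 < b / L) by (apply Rdiv_lt_0_compat; lra).
    assert (Hrr : b / L < Rpower r (l - m)).
    { replace (b / L) with (Rpower (r1_out n p b l) (l - m)).
      - apply Rlt_Rpower_l; lra.
      - unfold r1_out. fold L m. rewrite Rpower_mult.
        replace (1 / (l - m) * (l - m)) with 1 by (field; lra). apply Rpower_1; auto. }
    assert (HXY : Rpower r (l - m) * Y = X).
    { unfold X, Y. rewrite <- Rpower_plus. f_equal. ring. }
    assert (HbY : b * Y < L * X).
    { rewrite <- HXY.
      assert (b / L * (L * Y) < Rpower r (l - m) * (L * Y)) by (apply Rmult_lt_compat_r; nra).
      replace (b / L * (L * Y)) with (b * Y) in H by (field; lra). lra. }
    set (t := b * Y / (L * X)).
    assert (Ht0 : 0 < t) by (unfold t; apply Rdiv_lt_0_compat; nra).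
    assert (Ht1 : t < 1).
    { unfold t. apply (Rmult_lt_reg_r (L * X)). nra.
      replace (b * Y / (L * X) * (L * X)) with (b * Y) by (field; lra). lra. }
    replace (L * X - b * Y) with ((L * X) * (1 - t)) by (unfold t; field; lra).
    rewrite <- Rpower_mult_distr by nra.
    rewrite <- Rpower_mult_distr by lra.
    assert (HXp : Rpower X p = R6).
    { unfold X, R6. rewrite Rpower_mult. f_equal. nra. }
    assert (HLp : Rpower L p = L * QM).
    { assert (E : Rpower L ((p - 1) + 1) = Rpower L (p - 1) * Rpower L 1) by apply Rpower_plus.
      replace ((p - 1) + 1) with p in E by ring. rewrite E, HLK, Rpower_1 by auto. ring. }
    rewrite HXp, HLp.
    assert (HR6l : R6l * X = R6 * Y).
    { unfold R6l, X, R6, Y. rewrite <- !Rpower_plus. f_equal. ring. }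
    assert (E2 : QM * L * R6 - p * QM * b * R6l = L * QM * R6 * (1 - p * t)).
    { unfold t. apply (Rmult_eq_reg_r X); [|lra].
      replace ((QM * L * R6 - p * QM * b * R6l) * X) with (QM * L * R6 * X - p * QM * b * (R6l * X)) by ring.
      rewrite HR6l. field. lra. }
    rewrite E2.
    replace (L * QM * R6 * Rpower (1 - t) p) with (L * QM * R6 * Rpower (1 - t) p) by ring.
    apply Rmult_le_compat_l.
    + assert (0 < L * QM) by nra. nra.
    + apply bernoulli; lra.
Qed.
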